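(* In a Gibbs-type feature model with parameters $\alpha<1$, $\theta>-\alpha$ and weights $(V_{n,k})$, let $\mathbf Z^{(n)}$ be a sample with $K_n=k$ observed features and, for $m\ge1$, let $K^{(n)}_m$ be the number of distinct features displayed by individuals $n+1,\dots,n+m$ that are not among the $k$ features observed in $\mathbf Z^{(n)}$. Then for every $y\ge0$, $$P(K^{(n)}_m=y\mid\mathbf Z^{(n)})=\binom{k+y}{k}\frac{V_{n+m,k+y}}{V_{n,k}}\{(\theta+n)_m\}^{k+y}\{c_{n,m}(\theta,\alpha)\}^y,$$ where $c_{n,m}(\theta,\alpha)=\frac{(\theta+\alpha)_n}{\alpha}\Big(\frac{(\theta+\alpha+n)_m}{(\theta+n)_m}-1\Big)$ if $\alpha<0$, and $c_{n,m}(\theta,\alpha)=(\theta+1)_{n-1}\{g_{n+m}(\theta,\alpha)-g_n(\theta,\alpha)\}$ if $\alpha\in[0,1)$, with $g_n(\theta,\alpha)=\sum_{i=1}^n\frac{(\theta+\alpha)_{i-1}}{(\theta+1)_{i-1}}$.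
   Context: Notation: $(x)_m=\Gamma(x+m)/\Gamma(x)$ (Pochhammer symbol); $[n]=\{1,\dots,n\}$. Individuals $i=1,2,\dots$ each display a finite (possibly empty) set of features, identified by almost surely distinct labels. For the sample $\mathbf Z^{(n)}=(Z_1,\dots,Z_n)$ of the first $n$ individuals, $K_n$ is the number of distinct features displayed, labelled $X_1,\dots,X_{K_n}$ in order of appearance; $A_{i,\ell}\in\{0,1\}$ indicates whether individual $i$ displays $X_\ell$, and $m_\ell=\sum_{i=1}^nA_{i,\ell}\in[n]$. The ordered feature allocation is $F_n=(B_{n,1},\dots,B_{n,K_n})$, $B_{n,\ell}=\{i\in[n]:A_{i,\ell}=1\}$. The model admits an exchangeable feature probability function (EFPF) if there are symmetric functions $\pi_n:\bigcup_{k\ge0}[n]^k\to[0,1]$ with $P(F_n=f_n)=\pi_n(m_1,\dots,m_k)$ for every ordered feature allocation $f_n$ of $[n]$ (a sequence of $k$ nonempty subsets of $[n]$ with sizes $m_1,\dots,m_k$), all orderings of the same collection of sets being equally likely; the laws for different $n$ are consistent. The model is a Gibbs-type feature model with parameters $\alpha<1$, $\theta>-\alpha$ if $\pi_n(m_1,\dots,m_k)=V_{n,k}\prod_{\ell=1}^k(1-\alpha)_{m_\ell-1}(\theta+\alpha)_{n-m_\ell}$ for nonnegative weights $(V_{n,k})_{n\ge1,k\ge0}$ satisfying $V_{n,k}=\sum_{j\ge0}\frac{(k+j)!}{j!\,k!}\{(\theta+\alpha)_n\}^j(\theta+n)^kV_{n+1,k+j}$. *)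

(* Defs.v *)
From HB Require Import structures.
From mathcomp Require Import all_boot all_order all_algebra.
From mathcomp Require Import all_classical all_reals all_analysis.
Set Implicit Arguments. Unset Strict Implicit. Unset Printing Implicit Defensive.
Import Order.TTheory GRing.Theory Num.Theory.
Import numFieldNormedType.Exports.
Local Open Scope classical_set_scope.
Local Open Scope ring_scope.

Definition poch {R : nzRingType} (x : R) (m : nat) : R :=
  \prod_(i < m) (x + i%:R).

(* A feature (block) of an allocation of [N] is encoded by its indicator
   column (A_{1,l}, ..., A_{N,l}) : seq bool of size N; individual i (1-based)
   corresponds to position i-1.  An ordered feature allocation of [N] is a
   sequence of nonempty blocks. *)
Definition is_ofa (N : nat) (f : seq (seq bool)) : bool :=
  all (fun b => (size b == N) && has id b) f.

Definition bsize (b : seq bool) : nat := count id b.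

Definition ofa_restrict (n : nat) (f : seq (seq bool)) : seq (seq bool) :=
  seq.filter (has id) (map (take n) f).

(* Number of features of an allocation of [n+m] not displayed by any of the
   first n individuals, i.e. K^{(n)}_m computed from F_{n+m}. *)
Definition new_count (n : nat) (f : seq (seq bool)) : nat :=
  count (fun b => ~~ has id (take n b)) f.

Definition gibbs_efpf {R : nzRingType} (alpha theta : R) (V : nat -> nat -> R)
  (N : nat) (f : seq (seq bool)) : R :=
  V N (size f) *
  \prod_(b <- f) (poch (1 - alpha) (bsize b).-1 * poch (theta + alpha) (N - bsize b)).

Definition gibbs_weights {R : realType} (alpha theta : R) (V : nat -> nat -> R) : Prop :=
  (forall n k, 0 <= V n k) /\
  (forall n k, (1 <= n)%N ->
     (fun J : nat => \sum_(0 <= j < J)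
        (((k + j)%N`!)%:R / ((j`!)%:R * (k`!)%:R)) *
        (poch (theta + alpha) n) ^+ j * (theta + n%:R) ^+ k * V n.+1 (k + j)%N)
     @ \oo --> V n k).

Definition gfun {R : fieldType} (theta alpha : R) (n : nat) : R :=
  \sum_(1 <= i < n.+1) poch (theta + alpha) i.-1 / poch (theta + 1) i.-1.

Definition cnm {R : realFieldType} (theta alpha : R) (n m : nat) : R :=
  if alpha < 0 then
    poch (theta + alpha) n / alpha *
      (poch (theta + alpha + n%:R) m / poch (theta + n%:R) m - 1)
  else
    poch (theta + 1) n.-1 * (gfun theta alpha (n + m) - gfun theta alpha n).

Definition condprob {R : realType} {d : measure_display} {T : measurableType d}
  (P : probability T R) (A B : set T) : R :=
  fine (P (A `&` B)) / fine (P B).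

(* Main.v *)
Require Import Defs.
From HB Require Import structures.
From mathcomp Require Import all_boot all_order all_algebra.
From mathcomp Require Import all_classical all_reals all_analysis.
From mathcomp Require Import ring zify lra.
Import Order.TTheory GRing.Theory Num.Theory.
Local Open Scope classical_set_scope.
Local Open Scope ring_scope.



Lemma poch0 {R : nzRingType} (x : R) : poch x 0 = 1.
Proof. by rewrite /poch big_ord0. Qed.

Lemma pochSl {R : comNzRingType} (x : R) m : poch x m.+1 = x * poch (x + 1) m.
Proof.
rewrite /poch big_ord_recl /= addr0; congr (_ * _).
by apply: eq_bigr => i _; rewrite /bump /= add1n -nat1r addrA.
Qed.

Lemma pochSr {R : comNzRingType} (x : R) m : poch x m.+1 = poch x m * (x + m%:R).
Proof. by rewrite /poch big_ord_recr. Qed.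

Lemma pochD {R : comNzRingType} (x : R) p q :
  poch x (p + q) = poch x p * poch (x + p%:R) q.
Proof.
rewrite /poch big_split_ord /=; congr (_ * _).
by apply: eq_bigr => i _; rewrite natrD addrA.
Qed.

Fixpoint allbl (N : nat) : seq (seq bool) :=
  if N is N'.+1 then [seq c :: s | c <- [:: true; false], s <- allbl N']
  else [:: [::]].

Lemma allbl_size N s : s \in allbl N -> size s = N.
Proof.
elim: N s => [|N IH] s /=; first by rewrite inE => /eqP ->.
rewrite mem_cat cats0; case/orP => /mapP [t /IH <- ->] //.
Qed.

Arguments allbl_size {N s}.

Lemma allbl_mem N s : size s = N -> s \in allbl N.
Proof.
elim: N s => [|N IH] [|c s] //= [/IH hs].
by rewrite mem_cat cats0; case: c; [apply/orP; left|apply/orP; right];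
  apply/mapP; exists s.
Qed.

Lemma allbl_uniq N : uniq (allbl N).
Proof.
have inj c : injective (cons c : seq bool -> _) by move=> x y [].
elim: N => [|N IH] //=; rewrite cats0 cat_uniq !map_inj_uniq // IH /= andbT.
apply/hasPn => s /mapP [t _ ->]; apply/negP => /mapP [u _] //.
Qed.

Lemma big_allbl_cons {R : nmodType} N (G : seq bool -> R) :
  \sum_(s <- allbl N.+1) G s =
  \sum_(s <- allbl N) G (true :: s) + \sum_(s <- allbl N) G (false :: s).
Proof. by rewrite /= cats0 big_cat !big_map. Qed.

Lemma big_allbl_cat {R : nmodType} n m (G : seq bool -> R) :
  \sum_(b <- allbl (n + m)) G b =
  \sum_(u <- allbl n) \sum_(v <- allbl m) G (u ++ v).
Proof.
elim: n G => [|n IH] G; first by rewrite /= big_seq1.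
rewrite addSn !big_allbl_cons !IH //.
Qed.

Lemma big_allbl_nohas {R : nmodType} N (H : seq bool -> R) :
  \sum_(s <- allbl N) (if has id s then 0 else H s) = H (nseq N false).
Proof.
elim: N H => [|N IH] H; first by rewrite /= big_seq1.
rewrite big_allbl_cons /= big1 // add0r.
exact: (IH (fun s => H (false :: s))).
Qed.

Lemma vdm {R : comNzRingType} m : forall a b : R,
  \sum_(v <- allbl m) poch a (count id v) * poch b (count negb v) = poch (a + b) m.
Proof.
elim: m => [|m IH] a b; first by rewrite /= big_seq1 !poch0 mulr1.
rewrite big_allbl_cons /=.
under eq_bigr do rewrite add1n add0n pochSl -mulrA.
under [X in _ + X]eq_bigr do rewrite add0n add1n pochSl mulrCA.
rewrite -!mulr_sumr !IH pochSl.
have -> : a + 1 + b = a + b + 1 by ring.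
have -> : a + (b + 1) = a + b + 1 by ring.
ring.
Qed.

Definition Qs {R : comNzRingType} m (a b : R) :=
  \sum_(v <- allbl m) (if has id v then poch a (count id v).-1 * poch b (count negb v) else 0).

Lemma QsS {R : comNzRingType} m (a b : R) :
  Qs m.+1 a b = poch (a + b) m + b * Qs m a (b + 1).
Proof.
rewrite /Qs big_allbl_cons /=.
under eq_bigr do rewrite !add0n.
rewrite vdm; congr (_ + _); rewrite mulr_sumr; apply: eq_bigr => v _.
case: ifP => _; last by rewrite mulr0.
by rewrite !add0n add1n pochSl mulrCA.
Qed.

Lemma Qs0 {R : comNzRingType} (a b : R) : Qs 0 a b = 0.
Proof. by rewrite /Qs /= big_seq1. Qed.

Lemma Qneg {R : comNzRingType} m : forall a b : R,
  (1 - a) * Qs m a b = poch b m - poch (a + b - 1) m.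
Proof.
elim: m => [|m IH] a b; first by rewrite Qs0 !poch0 mulr0 subrr.
rewrite QsS mulrDr mulrCA IH !pochSl.
have -> : a + (b + 1) - 1 = a + b by ring.
have -> : a + b - 1 + 1 = a + b by ring.
ring.
Qed.



Lemma gfunS {R : fieldType} (th al : R) n :
  gfun th al n.+1 = gfun th al n + poch (th + al) n / poch (th + 1) n.
Proof. by rewrite /gfun big_nat_recr. Qed.

Lemma Qpos {R : fieldType} (th al : R) (hp : forall k, poch (th + 1) k != 0) m :
  forall n, (1 <= n)%N ->
  poch (th + al) n * Qs m (1 - al) (th + al + n%:R) =
  poch (th + 1) n.-1 * poch (th + n%:R) m * (gfun th al (n + m) - gfun th al n).
Proof.
elim: m => [|m IH] n hn; first by rewrite Qs0 addn0 subrr !mulr0.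
rewrite QsS mulrDr mulrCA.
have e1 : th + al + n%:R + 1 = th + al + n.+1%:R by rewrite -natr1 addrA.
have e2 : 1 - al + (th + al + n%:R) = th + n%:R + 1 by ring.
rewrite e1 e2.
rewrite mulrA (mulrC (th + al + n%:R)) -pochSr (IH n.+1 isT); clear e1 e2.
rewrite addnS -addSn gfunS pochSl.
case: n hn => [//|n] _ /=.
have := hp n.+1; rewrite pochSr mulf_eq0 negb_or => /andP[h1 h2].
rewrite -!natr1.
set p := poch (th + 1) n; set G1 := gfun _ _ _; set G2 := gfun _ _ _.
set pa := poch (th + al) _.
have -> : th + (n%:R + 1 + 1) = th + (n%:R + 1) + 1 by ring.
set q := poch (th + (n%:R + 1) + 1) m.
have -> : th + (n%:R + 1) = th + 1 + n%:R by ring.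
by field; rewrite h1 h2.
Qed.

Section T.
Definition wN {R : nzRingType} (al th : R) (N : nat) (b : seq bool) : R :=
  poch (1 - al) (bsize b).-1 * poch (th + al) (N - bsize b).
Definition Wg {R : nzRingType} (al th : R) N (g : seq (seq bool)) : R :=
  \prod_(b <- g) wN al th N b.
Definition good (n : nat) (f : seq (seq bool)) (y : nat) (g : seq (seq bool)) :=
  all (has id) g && (ofa_restrict n g == f) && (new_count n g == y).
Fixpoint allseqs (N l : nat) : seq (seq (seq bool)) :=
  if l is l'.+1 then [seq b :: r | b <- allbl N, r <- allseqs N l'] else [:: [::]].
Definition Tsum {R : nzRingType} (al th : R) n N l f y :=
  \sum_(g <- allseqs N l) (if good n f y g then Wg al th N g else 0).
Definition Anew {R : nzRingType} (al th : R) n N :=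
  \sum_(b <- allbl N) (if ~~ has id (take n b) && has id b then wN al th N b else 0).
Definition Bold {R : nzRingType} (al th : R) n N x :=
  \sum_(b <- allbl N) (if has id (take n b) && (take n b == x) then wN al th N b else 0).
End T.

Lemma has_take_id n (b : seq bool) : has id (take n b) -> has id b.
Proof. by rewrite -{2}(cat_take_drop n b) has_cat => ->. Qed.

Lemma good_cons {R : nzRingType} n f y b r (W1 W2 : R) :
  (if good n f y (b :: r) then W1 * W2 else 0) =
  (if ~~ has id (take n b) && has id b then W1 else 0) *
    (if y is y'.+1 then (if good n f y' r then W2 else 0) else 0) +
  (if f is x :: f0 then
     (if has id (take n b) && (take n b == x) then W1 else 0) *
     (if good n f0 y r then W2 else 0) else 0).
Proof.
rewrite /good /ofa_restrict /new_count /=.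
case h: (has id (take n b)) => /=.
- rewrite (@has_take_id n b h) /= mul0r add0r.
  case: f => [|x f0] //=; first by case: (all _ _).
  rewrite eqseq_cons.
  by case: (all _ _); case: (take n b == x); case: (_ == f0); case: (_ == y);
    rewrite /= ?mul1r ?mul0r ?mulr0 ?mulr1.
- rewrite add1n.
  have -> : (if f is x :: f0 then 0 * (if good n f0 y r then W2 else 0) else 0) = 0 :> R
    by case: f => *; rewrite ?mul0r.
  rewrite addr0; case: y => [|y] /=; first by rewrite andbF mulr0.
  rewrite eqSS.
  by case: (has id b); case: (all _ _); case: (_ == f); case: (_ == y);
    rewrite /= ?mul1r ?mul0r ?mulr0 ?mulr1.
Qed.

Lemma TsumS {R : comNzRingType} (al th : R) n N l f y :
  Tsum al th n N l.+1 f y =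
  Anew al th n N * (if y is y'.+1 then Tsum al th n N l f y' else 0) +
  (if f is x :: f0 then Bold al th n N x * Tsum al th n N l f0 y else 0).
Proof.
rewrite /Tsum /= big_allpairs_dep /=.
under eq_bigr do under eq_bigr do rewrite /Wg big_cons good_cons.
under eq_bigr do rewrite big_split /= -mulr_sumr.
rewrite big_split /= -big_distrl /=; congr (_ + _).
  by congr (_ * _); case: y => [|y] //; rewrite big1.
case: f => [|x f0] /=; first by rewrite big1 // => b _; rewrite big1.
by under eq_bigr do rewrite -big_distrr /=; rewrite -big_distrl.
Qed.

Lemma Tclosed {R : comNzRingType} (al th : R) n N l : forall f y,
  (size f + y)%N = l ->
  Tsum al th n N l f y =
  'C(size f + y, size f)%:R * Anew al th n N ^+ y * \prod_(x <- f) Bold al th n N x.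
Proof.
elim: l => [|l IH] f y.
  case: f => [|//]; case: y => [|//] _.
  by rewrite /Tsum /= big_seq1 /good /= /Wg big_nil big_nil bin0 !mulr1.
rewrite TsumS; case: f => [|x f0]; case: y => [|y] //= hs.
- rewrite IH //; last by move: hs; rewrite !add0n => -[].
  by rewrite !add0n !bin0 big_nil !mulr1 !mul1r exprS addr0.
- rewrite mulr0 add0r IH; last by move: hs; rewrite !addn0 => -[].
  by rewrite !addn0 !binn big_cons !mul1r.
- rewrite (IH (x :: f0) y); last by move: hs => /=; lia.
  rewrite (IH f0 y.+1); last by move: hs => /=; lia.
  rewrite [size (x :: f0)]/= big_cons.
  have hb : 'C((size f0).+1 + y.+1, (size f0).+1) =
     ('C((size f0).+1 + y, (size f0).+1) + 'C(size f0 + y.+1, size f0))%N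
    by rewrite addnS binS addSnnS.
  rewrite hb natrD exprS; ring.
Qed.



Lemma count_id_negb (v : seq bool) : (count id v + count negb v)%N = size v.
Proof. exact: (count_predC id). Qed.

Lemma Anew_eq {R : comNzRingType} (al th : R) n m :
  Anew al th n (n + m) = poch (th + al) n * Qs m (1 - al) (th + al + n%:R).
Proof.
rewrite /Anew big_allbl_cat big_seq.
under eq_bigr => u hu.
  have hun := allbl_size hu.
  under eq_bigr do rewrite (take_size_cat _ hun) has_cat.
  have -> : \sum_(v <- allbl m)
    (if ~~ has id u && (has id u || has id v) then wN al th (n + m) (u ++ v) else 0)
    = if has id u then 0 else
      \sum_(v <- allbl m) (if has id v then wN al th (n + m) (u ++ v) else 0).
    by case: (has id u) => //=; rewrite big1.
  over.
rewrite -big_seq (big_allbl_nohas n (fun u =>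
   \sum_(v <- allbl m) (if has id v then wN al th (n + m) (u ++ v) else 0))).
rewrite /Qs mulr_sumr big_seq [RHS]big_seq; apply: eq_bigr => v hv.
case: ifP => _; last by rewrite mulr0.
rewrite /wN /bsize count_cat count_nseq mul0n add0n.
have hs := count_id_negb v; rewrite (allbl_size hv) in hs.
have -> : (n + m - count id v = n + count negb v)%N by lia.
by rewrite pochD mulrCA.
Qed.

Lemma Bold_eq {R : comNzRingType} (al th : R) n m x :
  x \in allbl n -> has id x ->
  Bold al th n (n + m) x = wN al th n x * poch (th + n%:R) m.
Proof.
move=> hx hhx.
rewrite /Bold big_allbl_cat big_seq.
under eq_bigr => u hu do under eq_bigr do rewrite (take_size_cat _ (allbl_size hu)).
rewrite -big_seq (bigD1_seq x) ?allbl_uniq //= eqxx hhx /=.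
rewrite [X in _ + X]big1 ?addr0; last first.
  by move=> u hu; rewrite (negbTE hu) andbF big1.
have hxs := allbl_size hx.
have hc : (0 < count id x)%N by rewrite -has_count.
have hcn : (count id x <= n)%N by rewrite -hxs count_size.
rewrite big_seq.
under eq_bigr => v hv.
  rewrite /wN /bsize count_cat.
  have hs := count_id_negb v; rewrite (allbl_size hv) in hs.
  have -> : ((count id x + count id v).-1 = (count id x).-1 + count id v)%N by lia.
  have -> : (n + m - (count id x + count id v) = (n - count id x) + count negb v)%N by lia.
  rewrite !pochD.
  have -> : forall a b c d : R, a * b * (c * d) = (a * c) * (b * d)
    by move=> a b c d; ring.
  over.
rewrite -big_seq -mulr_sumr vdm /wN /bsize; congr (_ * poch _ _).
have e : ((count id x).-1 + (n - count id x)).+1 = n by lia.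
rewrite -[in RHS]e -natr1 natrD; ring.
Qed.



Lemma ofa_restrict_comp n p g : (n <= p)%N ->
  ofa_restrict n (ofa_restrict p g) = ofa_restrict n g.
Proof.
move=> hnp; rewrite /ofa_restrict; elim: g => [|b g IH] //=.
case h: (has id (take p b)) => /=.
  by rewrite take_takel // IH.
rewrite IH; case h': (has id (take n b)) => //.
have : has id (take n (take p b)) by rewrite take_takel.
by move/has_take_id; rewrite h.
Qed.

Lemma restrict_ofa n g : is_ofa n g -> ofa_restrict n g = g.
Proof.
rewrite /ofa_restrict; elim: g => [|b g IH] //= /andP[/andP[/eqP hb hh] hg].
by rewrite take_oversize ?hb // hh IH.
Qed.

Lemma size_restrict n g : size g = (size (ofa_restrict n g) + new_count n g)%N.
Proof.
rewrite /ofa_restrict /new_count; elim: g => [|b g IH] //=.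
by case: (has id (take n b)) => /=; rewrite IH ?addnS.
Qed.

Lemma allseqs_mem N l g :
  (g \in allseqs N l) = (size g == l) && all (fun b => size b == N) g.
Proof.
elim: l g => [|l IH] g /=.
  by rewrite inE; case: g.
apply/allpairsP/idP.
  by move=> [[b r] [/= /allbl_size hb hr ->]]; move: hr; rewrite IH /= hb eqxx.
case: g => [//|b r] /= /andP[hs /andP[hb hr]].
exists (b, r) => /=; split => //; first exact: allbl_mem (eqP hb).
by rewrite IH hr andbT.
Qed.

Lemma allseqs_uniq N l : uniq (allseqs N l).
Proof.
elim: l => [|l IH] //=; apply: allpairs_uniq => //; first exact: allbl_uniq.
by move=> [b r] [b' r'] _ _ /= [-> ->].
Qed.

Lemma P_list (R : realType) (d : measure_display) (T : measurableType d)
  (P : probability T R) (G : T -> seq (seq bool))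
  (hG : forall g, measurable [set w | G w = g]) (L : seq (seq (seq bool))) :
  uniq L -> measurable [set w | G w \in L] /\
  P [set w | G w \in L] = \sum_(g <- L) P [set w | G w = g].
Proof.
elim: L => [|a L IH] /=.
  have -> : [set w | G w \in [::]] = set0 by apply/seteqP; split => w.
  by rewrite big_nil measure0.
move=> /andP[haL /IH [hm he]].
have -> : [set w | G w \in a :: L] = [set w | G w = a] `|` [set w | G w \in L].
  apply/seteqP; split => w /=; rewrite in_cons.
    by case/orP => [/eqP h|h]; [left|right].
  by case => [->|->]; rewrite ?eqxx ?orbT.
split; first exact: measurableU.
rewrite measureU //= ?he ?big_cons //.
apply/seteqP; split => w //= [h1 h2]; move: haL; by rewrite -h1 h2.
Qed.

Lemma poch_gt0 {R : realFieldType} (x : R) k : 0 < x -> 0 < poch x k.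
Proof.
move=> hx; rewrite /poch; apply: prodr_gt0 => i _.
by apply: (lt_le_trans hx); rewrite lerDl ler0n.
Qed.

Lemma prod_const_seq {R : comNzRingType} (c : R) (f : seq (seq bool)) :
  \prod_(x <- f) c = c ^+ size f.
Proof. by elim: f => [|x f IH]; rewrite ?big_nil ?big_cons ?IH ?exprS. Qed.



Theorem theorem3 (R : realType) (d : measure_display) (Omega : measurableType d)
  (P : probability Omega R) (alpha theta : R) (V : nat -> nat -> R)
  (F : nat -> Omega -> seq (seq bool))
  (halpha : alpha < 1) (htheta : - alpha < theta)
  (hV : gibbs_weights alpha theta V)
  (hF_ofa : forall N w, is_ofa N (F N w))
  (hF_cons : forall N w, F N w = ofa_restrict N (F N.+1 w))
  (hF_meas : forall N f, measurable [set w | F N w = f])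
  (hF_law : forall N f, (1 <= N)%N -> is_ofa N f ->
     P [set w | F N w = f] = (gibbs_efpf alpha theta V N f)%:E) :
  forall (n m : nat) (f : seq (seq bool)) (y : nat),
    (1 <= n)%N -> (1 <= m)%N -> is_ofa n f ->
    P [set w | F n w = f] != 0%E ->
    condprob P [set w | new_count n (F (n + m)%N w) = y] [set w | F n w = f]
    = 'C(size f + y, size f)%:R * (V (n + m)%N (size f + y)%N / V n (size f))
      * (poch (theta + n%:R) m) ^+ (size f + y)%N * (cnm theta alpha n m) ^+ y.
Proof.
move=> n m f y hn hm hf hP.
have hres : forall j w, F n w = ofa_restrict n (F (n + j)%N w).
  elim=> [|j IH] w; first by rewrite addn0 restrict_ofa.
  by rewrite IH addnS hF_cons ofa_restrict_comp // leq_addr.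
set N := (n + m)%N; set k := size f.
set L := [seq g <- allseqs N (k + y) | good n f y g].
have hE : [set w | new_count n (F N w) = y] `&` [set w | F n w = f]
    = [set w | F N w \in L].
  apply/seteqP; split => w /=.
    move=> [hy hf']; rewrite mem_filter; apply/andP; split.
      have := hF_ofa N w; rewrite /is_ofa => hall.
      rewrite /good -hres hf' hy !eqxx !andbT.
      by apply/allP => b hb; have /andP[] := allP hall b hb.
    rewrite allseqs_mem; apply/andP; split.
      by rewrite (size_restrict n) -hres hf' hy.
    have := hF_ofa N w; rewrite /is_ofa => hall.
    by apply/allP => b hb; have /andP[] := allP hall b hb.
  rewrite mem_filter => /andP[/andP[/andP[_ /eqP hr] /eqP hy] _].
  by split => //; rewrite (hres m) hr.
have hLu : uniq L by rewrite filter_uniq // allseqs_uniq.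
have [_ hPL] := @P_list _ _ _ P _ (hF_meas N) _ hLu.
rewrite /condprob hE hPL.
rewrite big_seq.
under eq_bigr => g hg.
  move: hg; rewrite mem_filter allseqs_mem => /andP[/andP[/andP[hall _] _]
     /andP[/eqP hsz hsizes]].
  rewrite hF_law; last first.
    by apply/allP => b hb; rewrite (allP hsizes b hb) (allP hall b hb).
    by rewrite /N; lia.
  rewrite /gibbs_efpf hsz.
  over.
rewrite -big_seq sumEFin hF_law // /=.
rewrite -mulr_sumr big_filter.
have -> : \sum_(g <- allseqs N (k + y) | good n f y g)
    \prod_(b <- g) (poch (1 - alpha) (bsize b).-1 * poch (theta + alpha) (N - bsize b))
    = Tsum alpha theta n N (k + y) f y.
  by rewrite /Tsum big_mkcond.
rewrite Tclosed // /N Anew_eq.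
set pm := poch (theta + n%:R) m.
have hth1 : 0 < theta + 1.
  by lra.
have hpm : pm != 0.
  apply: lt0r_neq0; apply: poch_gt0.
  have : (1 <= n%:R :> R) by rewrite ler1n.
  lra.
have hpos : forall j, poch (theta + 1) j != 0 by move=> j; exact/lt0r_neq0/poch_gt0.
have hA : poch (theta + alpha) n * Qs m (1 - alpha) (theta + alpha + n%:R)
    = pm * cnm theta alpha n m.
  rewrite /cnm; case: ifP => ha.
    have hQ := Qneg m (1 - alpha) (theta + alpha + n%:R).
    have e1 : 1 - (1 - alpha) = alpha by ring.
    have e2 : 1 - alpha + (theta + alpha + n%:R) - 1 = theta + n%:R by ring.
    rewrite e1 e2 in hQ.
    have han : alpha != 0 by apply/eqP => h; move: ha; rewrite h ltxx.
    apply: (mulfI han); rewrite mulrCA hQ -/pm.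
    set q := poch (theta + alpha + n%:R) m; set pa := poch (theta + alpha) n.
    by field; rewrite hpm han.
  rewrite Qpos // /pm; ring.
rewrite hA exprMn.
have hW : gibbs_efpf alpha theta V n f = V n k * \prod_(x <- f) wN alpha theta n x by [].
have hne : gibbs_efpf alpha theta V n f != 0.
  by apply: contra hP; rewrite hF_law // => /eqP ->.
have hB : \prod_(x <- f) Bold alpha theta n (n + m) x
    = \prod_(x <- f) wN alpha theta n x * pm ^+ k.
  rewrite big_seq.
  under eq_bigr => x hx.
    have /andP[/eqP hs hh] := allP hf x hx.
    rewrite Bold_eq ?allbl_mem //.
    over.
  by rewrite -big_seq big_split /= prod_const_seq.
rewrite hB; rewrite hW in hne *; move: hne; rewrite mulf_eq0 negb_or => /andP[h1 h2].
rewrite exprD.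
set W := \prod_(x <- f) _; set c := cnm _ _ _ _.
set Vp := V _ _; set Vn := V _ _.
by field; rewrite h1 h2.
Qed.
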